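(* Let $\mathbb W=(W,I,\preccurlyeq,\circ,{}^\sim,{}^-,{}^\neg)$ be a DqRA-frame. For upsets $U$ of $(W,\preccurlyeq)$ define ${\sim}U=\{w\mid w^-\notin U\}$, $-U=\{w\mid w^\sim\notin U\}$, and $\neg U=\{x\in W\mid x^\neg\notin U\}$. Then $\mathbb W^+=(\mathsf{Up}(W,\preccurlyeq),\cap,\cup,\circ,I,\sim,-,\neg)$ is a distributive quasi relation algebra (DqRA).
   Context: For a set $W$ and $\circ:W\times W\to\mathcal P(W)$, $U\circ V=\bigcup\{a\circ b\mid a\in U,b\in V\}$, $x\circ V=\{x\}\circ V$, $U\circ y=U\circ\{y\}$; superscripts compose left to right, e.g. $x^{\sim\neg}=(x^\sim)^\neg$. $\mathsf{Up}(W,\preccurlyeq)$ is the set of upsets. A DInFL-frame is a tuple $(W,I,\preccurlyeq,\circ,{}^\sim,{}^-)$ with $I\subseteq W$, $\preccurlyeq$ a partial order, $\circ:W\times W\to\mathcal P(W)$, ${}^\sim,{}^-:W\to W$, such that for all $u,v,x,y,z$: (F1) $x\preccurlyeq y$ iff $y\in I\circ x$ iff $y\in x\circ I$; (F2) $x\preccurlyeq y$, $x\in I$ imply $y\in I$; (F3) $x\preccurlyeq y$, $x\in u\circ v$ imply $y\in u\circ v$; (F4) $(x\circ y)\circ z=x\circ(y\circ z)$; (F5) $z^\sim\in x\circ y$ iff $y^-\in z\circ x$; (F6) $x^{\sim-}\preccurlyeq x$ and $x^{-\sim}\preccurlyeq x$. A DqRA-frame is a tuple $(W,I,\preccurlyeq,\circ,{}^\sim,{}^-,{}^\neg)$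 such that the first six components form a DInFL-frame and ${}^\neg:W\to W$ satisfies: (F7) $x^{\neg\neg}=x$; (F8) $x\preccurlyeq y$ implies $y^\neg\preccurlyeq x^\neg$; (F9) $z^-\in x\circ y$ iff $z^\neg\in y^{\sim\neg}\circ x^{\sim\neg}$. An InFL-algebra is $(A,\wedge,\vee,\cdot,1,\sim,-)$ with a lattice, a monoid, and $a\cdot b\leqslant c\iff a\leqslant -(b\cdot{\sim}c)\iff b\leqslant{\sim}(-c\cdot a)$; $a+b:=-({\sim}b\cdot{\sim}a)$. A quasi relation algebra is $(A,\wedge,\vee,\cdot,1,\sim,-,\neg)$ where the $\neg$-free reduct is an InFL-algebra, $\neg\neg a=a$, $\neg(a\wedge b)=\neg a\vee\neg b$, and $\neg(a\cdot b)=\neg a+\neg b$. A DqRA is a quasi relation algebra with distributive lattice reduct. *)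

(* Defs.v *)
(* [circ x y z] means  z ∈ x ∘ y. *)
Record DInFL_frame (W : Type) (I : W -> Prop) (le : W -> W -> Prop)
    (circ : W -> W -> W -> Prop) (tl mn : W -> W) : Prop := {
  fr_refl : forall x, le x x;
  fr_antisym : forall x y, le x y -> le y x -> x = y;
  fr_trans : forall x y z, le x y -> le y z -> le x z;
  F1a : forall x y, le x y <-> (exists i, I i /\ circ i x y);
  F1b : forall x y, le x y <-> (exists i, I i /\ circ x i y);
  F2 : forall x y, le x y -> I x -> I y;
  F3 : forall u v x y, le x y -> circ u v x -> circ u v y;
  F4 : forall x y z w,
      (exists a, circ x y a /\ circ a z w) <-> (exists b, circ y z b /\ circ x b w);
  F5 : forall x y z, circ x y (tl z) <-> circ z x (mn y);
  F6a : forall x, le (mn (tl x)) x;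
  F6b : forall x, le (tl (mn x)) x
}.

Record DqRA_frame (W : Type) (I : W -> Prop) (le : W -> W -> Prop)
    (circ : W -> W -> W -> Prop) (tl mn ng : W -> W) : Prop := {
  dq_DInFL : @DInFL_frame W I le circ tl mn;
  F7 : forall x, ng (ng x) = x;
  F8 : forall x y, le x y -> le (ng y) (ng x);
  F9 : forall x y z, circ x y (mn z) <-> circ (ng (tl y)) (ng (tl x)) (ng z)
}.

Definition upset {W : Type} (le : W -> W -> Prop) (U : W -> Prop) : Prop :=
  forall x y, le x y -> U x -> U y.

Definition UpT {W : Type} (le : W -> W -> Prop) : Type := {U : W -> Prop | upset le U}.

Definition set_circ {W : Type} (circ : W -> W -> W -> Prop) (U V : W -> Prop) : W -> Prop :=
  fun w => exists a b, U a /\ V b /\ circ a b w.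
Definition set_tl {W : Type} (mn : W -> W) (U : W -> Prop) : W -> Prop := fun w => ~ U (mn w).
Definition set_mn {W : Type} (tl : W -> W) (U : W -> Prop) : W -> Prop := fun w => ~ U (tl w).
Definition set_ng {W : Type} (ng : W -> W) (U : W -> Prop) : W -> Prop := fun w => ~ U (ng w).

Section Alg.
Context {A : Type} (meet join dot : A -> A -> A) (one : A) (tl mn ng : A -> A).
Definition ale (a b : A) : Prop := meet a b = a.
Definition aplus (a b : A) : A := mn (dot (tl b) (tl a)).

Record is_DqRA : Prop := {
  meetC : forall a b, meet a b = meet b a;
  meetA : forall a b c, meet a (meet b c) = meet (meet a b) c;
  joinC : forall a b, join a b = join b a;
  joinA : forall a b c, join a (join b c) = join (join a b) c;
  absorb1 : forall a b, meet a (join a b) = a;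
  absorb2 : forall a b, join a (meet a b) = a;
  distr : forall a b c, meet a (join b c) = join (meet a b) (meet a c);
  dotA : forall a b c, dot a (dot b c) = dot (dot a b) c;
  dot1l : forall a, dot one a = a;
  dot1r : forall a, dot a one = a;
  resid1 : forall a b c, ale (dot a b) c <-> ale a (mn (dot b (tl c)));
  resid2 : forall a b c, ale a (mn (dot b (tl c))) <-> ale b (tl (dot (mn c) a));
  ngK : forall a, ng (ng a) = a;
  ng_meet : forall a b, ng (meet a b) = join (ng a) (ng b);
  ng_dot : forall a b, ng (dot a b) = aplus (ng a) (ng b)
}.
End Alg.

(* Main.v *)
Require Import Defs.
From Stdlib Require Import Classical FunctionalExtensionality PropExtensionality ProofIrrelevance.

Lemma up_ext {W} (le : W -> W -> Prop) (U V : UpT le) :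
  (forall w, proj1_sig U w <-> proj1_sig V w) -> U = V.
Proof.
  destruct U as [U hU], V as [V hV]; simpl; intros h.
  assert (U = V) by (extensionality w; apply propositional_extensionality; auto).
  subst. f_equal. apply proof_irrelevance.
Qed.

Definition upMeet {W} (le : W -> W -> Prop) (U V : UpT le) : UpT le.
Proof.
  refine (exist _ (fun w => proj1_sig U w /\ proj1_sig V w) _).
  destruct U as [U hU], V as [V hV]; intros x y h [a b]; simpl; eauto.
Defined.

Definition upJoin {W} (le : W -> W -> Prop) (U V : UpT le) : UpT le.
Proof.
  refine (exist _ (fun w => proj1_sig U w \/ proj1_sig V w) _).
  destruct U as [U hU], V as [V hV]; intros x y h [a|b]; simpl; eauto.
Defined.

Definition upDot {W} {le : W -> W -> Prop} {circ : W -> W -> W -> Prop}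
  (h3 : forall u v x y, le x y -> circ u v x -> circ u v y) (U V : UpT le) : UpT le.
Proof.
  refine (exist _ (set_circ circ (proj1_sig U) (proj1_sig V)) _).
  intros x y h [a [b [ha [hb hc]]]]. exists a, b. eauto.
Defined.

Definition upOne {W} {le : W -> W -> Prop} {I : W -> Prop}
  (h2 : forall x y, le x y -> I x -> I y) : UpT le := exist _ I h2.

Definition upUn {W} {le : W -> W -> Prop} (f : W -> W)
  (hf : forall x y, le x y -> le (f y) (f x)) (U : UpT le) : UpT le.
Proof.
  refine (exist _ (fun w => ~ proj1_sig U (f w)) _).
  destruct U as [U hU]; simpl. intros x y h nx uy. apply nx. eapply hU; [apply hf, h|exact uy].
Defined.

Lemma ale_iff {W} (le : W -> W -> Prop) (U V : UpT le) :
  ale (upMeet le) U V <-> forall w, proj1_sig U w -> proj1_sig V w.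
Proof.
  unfold ale; split.
  - intros h w hw. pose proof (f_equal (fun X => proj1_sig X w) h) as e. simpl in e.
    rewrite <- e in hw. tauto.
  - intros h. apply up_ext. simpl. intro w. split; [tauto|]. intro; split; auto.
Qed.

Theorem mainTheorem9 (W : Type) (I : W -> Prop) (le : W -> W -> Prop)
    (circ : W -> W -> W -> Prop) (tl mn ng : W -> W) :
  @DqRA_frame W I le circ tl mn ng ->
  exists (meet join dot : UpT le -> UpT le -> UpT le) (one : UpT le)
         (tlU mnU ngU : UpT le -> UpT le),
    (forall U V w, proj1_sig (meet U V) w <-> proj1_sig U w /\ proj1_sig V w) /\
    (forall U V w, proj1_sig (join U V) w <-> proj1_sig U w \/ proj1_sig V w) /\
    (forall U V w, proj1_sig (dot U V) w <-> set_circ circ (proj1_sig U) (proj1_sig V) w) /\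
    (forall w, proj1_sig one w <-> I w) /\
    (forall U w, proj1_sig (tlU U) w <-> set_tl mn (proj1_sig U) w) /\
    (forall U w, proj1_sig (mnU U) w <-> set_mn tl (proj1_sig U) w) /\
    (forall U w, proj1_sig (ngU U) w <-> set_ng ng (proj1_sig U) w) /\
    is_DqRA meet join dot one tlU mnU ngU.
Proof.
  intros [HD F7 F8 F9].
  destruct HD as [refl antis trans F1a F1b F2 F3 F4 F5 F6a F6b].
  assert (GC : forall z b, le z (mn b) <-> le b (tl z)).
  { intros z b; split; intro h.
    - apply F1b in h as [i [Ii c]]. apply F1a. exists i. split; auto. apply F5; auto.
    - apply F1a in h as [i [Ii c]]. apply F1b. exists i. split; auto. apply F5; auto. }
  assert (tm : forall x, mn (tl x) = x).
  { intro x. apply antis; auto. apply GC. apply refl. }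
  assert (mt : forall x, tl (mn x) = x).
  { intro x. apply antis; auto. apply GC. apply refl. }
  assert (mn_anti : forall x y, le x y -> le (mn y) (mn x)).
  { intros x y h. apply GC. rewrite mt. auto. }
  assert (tl_anti : forall x y, le x y -> le (tl y) (tl x)).
  { intros x y h. apply GC. rewrite tm. auto. }
  assert (P : forall p q w, circ (mn p) (mn q) (mn w) <-> circ (tl p) (tl q) (tl w)).
  { intros p q w.
    split; intro h.
    - apply (proj2 (F5 (mn q) w (mn p))) in h. rewrite mt in h.
      apply F5. rewrite tm. rewrite <- (mt q). apply F5. rewrite tm. exact h.
    - apply F5 in h. rewrite tm in h. rewrite <- (mt q) in h. apply F5 in h.
      rewrite tm in h. apply (F5 (mn q) w (mn p)). rewrite mt. exact h. }
  assert (K : forall x y w, circ x y (tl w) <-> circ (ng (mn y)) (ng (mn x)) (ng w)).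
  { intros x y w. rewrite <- (mt (mn y)), <- (mt (mn x)), <- F9.
    rewrite P, !mt. tauto. }
  exists (upMeet le), (upJoin le), (upDot F3), (upOne F2),
    (upUn mn mn_anti), (upUn tl tl_anti), (upUn ng F8).
  do 7 (split; [intros; simpl; tauto|]).
  constructor; intros.
  1-7: (apply up_ext; intro w; destruct a; try destruct b; try destruct c; simpl; tauto).
  -
    apply up_ext; intro w; destruct a as [A hA], b as [B hB], c as [C hC];
      simpl; unfold set_circ; split.
    + intros [x [y [ax [[x' [y' [bx [cy c1]]]] c2]]]].
      destruct (proj2 (F4 x x' y' w) (ex_intro _ y (conj c1 c2))) as [m [m1 m2]].
      exists m, y'. split; [|split; auto]. exists x, x'. auto.
    + intros [x [y [[x' [y' [ax [by0 c1]]]] [cy c2]]]].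
      destruct (proj1 (F4 x' y' y w) (ex_intro _ x (conj c1 c2))) as [m [m1 m2]].
      exists x', m. split; auto. split; auto. exists y', y. auto.
  - apply up_ext; intro w; destruct a as [A hA]; simpl; unfold set_circ; split.
    + intros [i [b [Ii [Ab c]]]]. eapply hA; [|exact Ab]. apply F1a. eauto.
    + intros Aw. destruct (proj1 (F1a w w) (refl w)) as [i [Ii c]]. exists i, w. auto.
  - apply up_ext; intro w; destruct a as [A hA]; simpl; unfold set_circ; split.
    + intros [b [i [Ab [Ii c]]]]. eapply hA; [|exact Ab]. apply F1b. eauto.
    + intros Aw. destruct (proj1 (F1b w w) (refl w)) as [i [Ii c]]. exists w, i. auto.
  -
    rewrite !ale_iff. destruct a as [A hA], b as [B hB], c as [C hC]; simpl;
      unfold set_circ. split.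
    + intros L w aw [x [y [bx [ncy hc]]]]. apply ncy. apply L. exists w, x.
      split; auto. split; auto. apply F5; auto.
    + intros R w [x [y [ax [by0 hc]]]]. apply NNPP; intro ncw. apply (R x ax).
      exists y, (tl w). rewrite tm. split; auto. split; auto. apply F5. rewrite tm. auto.
  -
    rewrite !ale_iff. destruct a as [A hA], b as [B hB], c as [C hC]; simpl;
      unfold set_circ. split.
    + intros L w bw [x [y [ncx [ay hc]]]]. apply F5 in hc.
      apply (L y ay). exists w, (tl (tl x)). rewrite tm. split; auto. split; auto.
      apply F5. rewrite tm. auto.
    + intros R w aw [x [y [bx [ncy hc]]]]. apply F5 in hc.
      apply (R x bx). exists (mn (mn y)), w. rewrite mt. split; auto. split; auto.
      apply F5. rewrite mt. auto.
  - apply up_ext; intro w; destruct a as [A hA]; simpl. rewrite F7.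
    split; [apply NNPP | tauto].
  - apply up_ext; intro w; destruct a as [A hA], b as [B hB]; simpl.
    destruct (classic (A (ng w))); tauto.
  - apply up_ext; intro w; destruct a as [A hA], b as [B hB]; simpl;
      unfold aplus, set_circ; simpl. split; intros N E; apply N.
    + destruct E as [x [y [bx [ay hc]]]]. exists (ng (mn y)), (ng (mn x)).
      split; [apply NNPP; auto|]. split; [apply NNPP; auto|]. apply K; auto.
    + destruct E as [x0 [y0 [ax [bx hc]]]]. exists (tl (ng y0)), (tl (ng x0)).
      rewrite !tm, !F7. split; [tauto|]. split; [tauto|].
      apply K. rewrite !tm, !F7. auto.
Qed.
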